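(* Let $n=2k$ be a positive even integer. Let $f_1,f_2,f_3$ be three pairwise distinct bent Boolean functions on $\mathbb{F}_{2^n}$ such that $f_4:=f_1+f_2+f_3$ is also bent, and let $\sigma=f_1f_2+f_1f_3+f_2f_3$. Then: 1) $\sigma$ is bent if and only if $f_1^*+f_2^*+f_3^*+f_4^*=0$; and if $\sigma$ is bent, then $\sigma^*=f_1^*f_2^*+f_1^*f_3^*+f_2^*f_3^*$; 2) $\sigma$ is semi-bent if and only if $f_1^*+f_2^*+f_3^*+f_4^*=1$ (the constant function $1$); 3) otherwise (i.e. $f_1^*+f_2^*+f_3^*+f_4^*$ is not constant), $\{|W_\sigma(\lambda)| : \lambda\in\mathbb{F}_{2^n}\}=\{0,2^k,2^{k+1}\}$.
   Context: A Boolean function on $\mathbb{F}_{2^n}$ is a map $f:\mathbb{F}_{2^n}\to\mathbb{F}_2$. Its Walsh transform is $W_f(a)=\sum_{x\in\mathbb{F}_{2^n}}(-1)^{f(x)+\mathrm{Tr}^n_1(ax)}$, where $\mathrm{Tr}^n_1(x)=\sum_{i=0}^{n-1}x^{2^i}$. $f$ is bent if $|W_f(a)|=2^{n/2}$ for all $a$; then its dual $f^*$ is the Boolean function with $W_f(a)=2^{n/2}(-1)^{f^*(a)}$. For $n$ even, $f$ is semi-bent if $W_f$ takes values in $\{0,\pm 2^{n/2+1}\}$. Sums of Boolean functions are taken modulo 2. *)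

(* Defs.v *)
(* F_{2^n} is modelled by an arbitrary finite field F with #|F| = 2^n
   (any such field is isomorphic to F_{2^n}). Boolean functions are maps F -> bool,
   and addition of Boolean functions is xor, multiplication is &&. *)
From mathcomp Require Import all_boot all_order all_algebra.
Set Implicit Arguments. Unset Strict Implicit. Unset Printing Implicit Defensive.
Import Order.TTheory GRing.Theory Num.Theory.
Local Open Scope ring_scope.

Section Boolean.
Variable F : finFieldType.

Definition trace (n : nat) (x : F) : F := \sum_(i < n) x ^+ (2 ^ i).

Definition walsh (n : nat) (f : F -> bool) (a : F) : int :=
  \sum_(x : F) (-1) ^+ (f x (+) (trace n (a * x) == 1)).

Definition bent (n : nat) (f : F -> bool) : Prop :=
  forall a, `|walsh n f a|%N = (2 ^ n./2)%N.

(* dual: W_f(a) = 2^{n/2} (-1)^{f*(a)}, i.e. f*(a) = 1 iff W_f(a) < 0 (for bent f) *)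
Definition dual (n : nat) (f : F -> bool) (a : F) : bool := walsh n f a < 0.

Definition semibent (n : nat) (f : F -> bool) : Prop :=
  forall a, walsh n f a \in [:: 0; (2 ^ (n./2).+1)%:Z; - (2 ^ (n./2).+1)%:Z].
End Boolean.

(* Main.v *)
Require Import Defs.
From mathcomp Require Import all_boot all_order all_algebra all_field.
From mathcomp Require Import ring.
Import Order.TTheory GRing.Theory Num.Theory.
Set Implicit Arguments. Unset Strict Implicit. Unset Printing Implicit Defensive.
Local Open Scope ring_scope.

Lemma char2 (F : finFieldType) n : #|F| = (2 ^ n)%N -> 2 \in [pchar F].
Proof. by move=> h; apply: (card_finPcharP h). Qed.

Lemma trace_add (F : finFieldType) n (x y : F) : 2 \in [pchar F] ->
  trace n (x + y) = trace n x + trace n y.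
Proof.
move=> ch; rewrite /trace -big_split; apply: eq_bigr => i _.
apply: exprDn_pchar; rewrite pnatX; apply/orP; left.
by apply: (eq_pnat _ (pcharf_eq ch)); apply: pnat_id.
Qed.

Lemma trace_sq (F : finFieldType) n (x : F) : #|F| = (2 ^ n)%N -> (0 < n)%N ->
  trace n x ^+ 2 = trace n x.
Proof.
move=> hF hn; have ch := char2 hF.
have sq2 : forall a b : F, (a + b) ^+ 2 = a ^+ 2 + b ^+ 2.
  move=> a b; apply: exprDn_pchar; apply: (eq_pnat _ (pcharf_eq ch)); exact: pnat_id.
rewrite /trace (big_morph (fun a : F => a ^+ 2) sq2 (expr0n _ 2)).
under eq_bigr => i _ do rewrite -exprM -expnSr.
case: n hn hF => // m _ hF.
rewrite big_ord_recr big_ord_recl /= -hF expf_card expn0 expr1 addrC.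
by congr (_ + _); apply: eq_bigr => i _; rewrite /bump /=.
Qed.

Lemma trace01 (F : finFieldType) n (x : F) : #|F| = (2 ^ n)%N -> (0 < n)%N ->
  trace n x = 0 \/ trace n x = 1.
Proof.
move=> hF hn; have := trace_sq x hF hn.
move/eqP; rewrite expr2 -subr_eq0 -[X in _ - X](mulr1 (trace n x)) -mulrBr mulf_eq0 subr_eq0.
by case/orP => /eqP; [left|right].
Qed.

From mathcomp Require Import zify.

Lemma trace_surj (F : finFieldType) n : #|F| = (2 ^ n)%N -> (0 < n)%N ->
  exists c : F, trace n c = 1.
Proof.
move=> hF hn.
case: (pickP (fun c : F => trace n c == 1)) => [c /eqP hc|H]; first by exists c.
have H0 : forall c : F, trace n c = 0.
  by move=> c; case: (trace01 c hF hn) => // h; have := H c; rewrite /= h eqxx.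
case: n hn hF H H0 => // m _ hF _ H0.
pose P : {poly F} := \sum_(i < m.+1) 'X^(2 ^ i).
have PE : forall c, P.[c] = trace m.+1 c.
  by move=> c; rewrite /P horner_sum; apply: eq_bigr => i _; rewrite hornerXn.
have P1 : P`_1 = 1.
  rewrite /P coef_sum big_ord_recl /= coefXn /= big1 ?addr0 // => i _.
  rewrite coefXn; have : (1 < 2 ^ (bump 0 i))%N.
    rewrite /bump /= add1n expnS; have := expn_gt0 2 i; lia.
  by case: eqP => // <-; rewrite ltnn.
have Pn0 : P != 0 by apply/eqP => h; move: P1; rewrite h coef0 => /eqP; rewrite eq_sym oner_eq0.
have Psz : (size P <= (2 ^ m).+1)%N.
  rewrite /P; apply: (big_ind (fun p : {poly F} => (size p <= (2 ^ m).+1)%N)).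
  - by rewrite size_poly0.
  - move=> p q hp hq; apply: leq_trans (size_polyD _ _) _; by rewrite geq_max hp hq.
  - move=> i _; rewrite size_polyXn ltnS leq_exp2l //; rewrite -ltnS; exact: ltn_ord.
have := max_poly_roots Pn0 _ (enum_uniq (pred_of_simpl predT)).
rewrite -cardE hF.
have -> : all (root P) (enum (pred_of_simpl predT)) by apply/allP => c _; rewrite /root PE H0.
move=> /(_ isT) h; have := leq_trans h Psz; rewrite expnS; have := expn_gt0 2 m; lia.
Qed.

Definition chi (F : finFieldType) n (x : F) : int := (-1) ^+ (trace n x == 1).

Lemma chi_add (F : finFieldType) n (x y : F) : #|F| = (2 ^ n)%N -> (0 < n)%N ->
  chi n (x + y) = chi n x * chi n y.
Proof.
move=> hF hn; have ch := char2 hF.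
rewrite /chi -signr_addb trace_add //.
have h10 : (1 : F) != 0 by exact: oner_neq0.
case: (trace01 x hF hn) => ->; case: (trace01 y hF hn) => ->;
  rewrite ?addr0 ?add0r ?(addrr_pchar2 ch) ?eqxx //= ?(eq_sym 0) ?(negbTE h10) //.
Qed.

Lemma trace0 (F : finFieldType) n : #|F| = (2 ^ n)%N -> trace n (0 : F) = 0.
Proof.
move=> _; rewrite /trace big1 // => i _; by rewrite expr0n expn_eq0.
Qed.

Lemma chi_sum (F : finFieldType) n (z : F) : #|F| = (2 ^ n)%N -> (0 < n)%N ->
  \sum_a chi n (a * z) = if z == 0 then (#|F|)%:Z else 0.
Proof.
move=> hF hn; case: eqP => [->|/eqP z0].
  under eq_bigr => a _ do rewrite mulr0 /chi trace0 // eq_sym oner_eq0 expr0.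
  by rewrite sumr_const -natz.
rewrite -(reindex_inj (F := chi n) (P := xpredT) (mulIf z0)) /=.
have [c hc] := trace_surj hF hn.
set S := \sum_i _.
have : S = - S.
  rewrite {1}/S (reindex_inj (addIr c)) /= -sumrN; apply: eq_bigr => b _.
  by rewrite chi_add // /chi hc eqxx expr1 mulrN1.
by move/eqP; rewrite -subr_eq0 opprK -mulr2n mulrn_eq0 /= => /eqP.
Qed.

Lemma walshE (F : finFieldType) n (f : F -> bool) a :
  walsh n f a = \sum_x (-1) ^+ (f x) * chi n (a * x).
Proof. by apply: eq_bigr => x _; rewrite signr_addb. Qed.

Lemma parseval (F : finFieldType) n (f : F -> bool) : #|F| = (2 ^ n)%N -> (0 < n)%N ->
  \sum_a walsh n f a ^+ 2 = (#|F| ^ 2)%N%:Z.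
Proof.
move=> hF hn; have ch := char2 hF.
have E : forall a, walsh n f a ^+ 2 = \sum_x \sum_y
    ((-1) ^+ f x * (-1) ^+ f y) * chi n (a * (x + y)).
  move=> a; rewrite expr2 walshE mulr_suml; apply: eq_bigr => x _.
  rewrite mulr_sumr; apply: eq_bigr => y _.
  by rewrite mulrDr chi_add // mulrACA.
rewrite (eq_bigr _ (fun a _ => E a)) exchange_big /=.
transitivity (\sum_(x : F) (#|F|)%:Z).
  apply: eq_bigr => x _; rewrite exchange_big /=.
  under eq_bigr => y _ do rewrite -big_distrr /= chi_sum //.
  rewrite (bigD1 x) //= big1 ?addr0.
    by rewrite (addrr_pchar2 ch) eqxx -signr_addb addbb expr0 mul1r.
  move=> y yx; case: eqP; rewrite ?mulr0 // => /eqP.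
  by rewrite addr_eq0 (oppr_pchar2 ch) eq_sym (negbTE yx).
rewrite sumr_const -natz -mulrnA natz; congr Posz; by rewrite mulnn.
Qed.

Lemma sigma_pt (a b c : bool) :
  2 * (-1) ^+ ((a && b) (+) (a && c) (+) (b && c)) =
  (-1) ^+ a + (-1) ^+ b + (-1) ^+ c - (-1) ^+ (a (+) b (+) c) :> int.
Proof. by case: a; case: b; case: c. Qed.

Definition Sv (b1 b2 b3 b4 : bool) : int :=
  (-1) ^+ b1 + (-1) ^+ b2 + (-1) ^+ b3 - (-1) ^+ b4.

Lemma ptA b1 b2 b3 b4 : b1 (+) b2 (+) b3 (+) b4 ->
  Sv b1 b2 b3 b4 = 0 \/ Sv b1 b2 b3 b4 = 4 \/ Sv b1 b2 b3 b4 = -4.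
Proof. by case: b1; case: b2; case: b3; case: b4 => //= _; auto. Qed.

Lemma ptB b1 b2 b3 b4 : b1 (+) b2 (+) b3 (+) b4 = false ->
  Sv b1 b2 b3 b4 = 2 * (-1) ^+ ((b1 && b2) (+) (b1 && b3) (+) (b2 && b3)).
Proof. by case: b1; case: b2; case: b3; case: b4. Qed.

Lemma cancel_m (m : nat) (X : int) : (0 < m)%N ->
  (m%:Z) ^+ 2 * X = ((4 * m * m) ^ 2)%N%:Z -> X = 16 * m%:Z * m%:Z.
Proof.
move=> m0 h; apply: (@mulfI _ (m%:Z ^+ 2)).
  by rewrite expf_eq0 /= -lt0n m0.
rewrite h -natz natrX !natrM natz; ring.
Qed.

Lemma bentE (F : finFieldType) k (f : F -> bool) a : bent k.*2 f ->
  walsh k.*2 f a = (2 ^ k)%:Z * (-1) ^+ (dual k.*2 f a).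
Proof. by move=> hb; rewrite {1}(intEsign (walsh k.*2 f a)) hb doubleK mulrC. Qed.

Lemma pA1 b1 b2 b3 b4 : b1 (+) b2 (+) b3 (+) b4 ->
  (`|Sv b1 b2 b3 b4|%N == 0%N) || (`|Sv b1 b2 b3 b4|%N == 4%N).
Proof. by case: b1; case: b2; case: b3; case: b4. Qed.

Lemma pB1 b1 b2 b3 b4 : b1 (+) b2 (+) b3 (+) b4 = false -> `|Sv b1 b2 b3 b4|%N = 2%N.
Proof. by case: b1; case: b2; case: b3; case: b4. Qed.

Lemma pB2 b1 b2 b3 b4 : b1 (+) b2 (+) b3 (+) b4 = false ->
  (Sv b1 b2 b3 b4 < 0) = (b1 && b2) (+) (b1 && b3) (+) (b2 && b3).
Proof. by case: b1; case: b2; case: b3; case: b4. Qed.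

Lemma pB3 b1 b2 b3 b4 : b1 (+) b2 (+) b3 (+) b4 = false ->
  Sv b1 b2 b3 b4 = 2 \/ Sv b1 b2 b3 b4 = -2.
Proof. by case: b1; case: b2; case: b3; case: b4; auto. Qed.

Theorem theorem2 (F : finFieldType) (k : nat) (f1 f2 f3 : F -> bool) :
  (0 < k)%N -> #|F| = (2 ^ k.*2)%N ->
  f1 <> f2 -> f1 <> f3 -> f2 <> f3 ->
  bent k.*2 f1 -> bent k.*2 f2 -> bent k.*2 f3 ->
  let f4 := fun x => f1 x (+) f2 x (+) f3 x in
  bent k.*2 f4 ->
  let sigma := fun x => (f1 x && f2 x) (+) (f1 x && f3 x) (+) (f2 x && f3 x) in
  let g := fun x => dual k.*2 f1 x (+) dual k.*2 f2 x (+) dual k.*2 f3 x (+) dual k.*2 f4 x in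
  (* 1) *)
  ((bent k.*2 sigma <-> (forall x, g x = false)) /\
   (bent k.*2 sigma -> forall x,
      dual k.*2 sigma x =
        (dual k.*2 f1 x && dual k.*2 f2 x) (+) (dual k.*2 f1 x && dual k.*2 f3 x)
          (+) (dual k.*2 f2 x && dual k.*2 f3 x))) /\
  (* 2) *)
  (semibent k.*2 sigma <-> (forall x, g x = true)) /\
  (* 3) *)
  ((exists x, g x) -> (exists y, ~~ g y) ->
     (forall l, `|walsh k.*2 sigma l|%N \in [:: 0%N; (2 ^ k)%N; (2 ^ k.+1)%N]) /\
     (forall v, v \in [:: 0%N; (2 ^ k)%N; (2 ^ k.+1)%N] ->
        exists l, `|walsh k.*2 sigma l|%N = v)).
Proof.
case: k => // k _ hF _ _ _ b1 b2 b3 f4 b4 sigma g.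
have hn : (0 < k.+1.*2)%N by [].
pose S a := Sv (dual k.+1.*2 f1 a) (dual k.+1.*2 f2 a) (dual k.+1.*2 f3 a) (dual k.+1.*2 f4 a).
have hA : forall a, g a -> S a = 0 \/ S a = 4 \/ S a = -4 := fun a h => ptA h.
have hA1 : forall a, g a -> (`|S a|%N == 0%N) || (`|S a|%N == 4%N) := fun a h => pA1 h.
have hB1 : forall a, g a = false -> `|S a|%N = 2%N := fun a h => pB1 h.
have hB3 : forall a, g a = false -> S a = 2 \/ S a = -2 := fun a h => pB3 h.
pose m := (2 ^ k)%N.
have m0 : (0 < m)%N by rewrite expn_gt0.
have e1 : (2 ^ k.+1 = 2 * m)%N by rewrite expnS.
have e2 : (2 ^ k.+2 = 4 * m)%N by rewrite !expnS mulnA.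
have hW : forall a, walsh k.+1.*2 sigma a = m%:Z * S a.
  move=> a; apply: (@mulfI _ 2) => //.
  transitivity (walsh k.+1.*2 f1 a + walsh k.+1.*2 f2 a + walsh k.+1.*2 f3 a
                - walsh k.+1.*2 f4 a).
    rewrite !walshE mulr_sumr -!big_split -sumrB /=; apply: eq_bigr => x _.
    by rewrite mulrA sigma_pt mulrBl !mulrDl.
  rewrite !(bentE a) // /S /Sv e1 PoszM; ring.
have habs : forall a, `|walsh k.+1.*2 sigma a|%N = (m * `|S a|%N)%N.
  by move=> a; rewrite hW abszM.
have part1 : bent k.+1.*2 sigma <-> (forall x, g x = false).
  split.
  + move=> hb x; apply/negbTE/negP => gx; have := hb x; rewrite habs doubleK e1.
    by case/orP: (hA1 x gx) => /eqP ->; lia.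
  + by move=> hg a; rewrite habs doubleK e1 hB1 // mulnC.
split; [split|split].
- exact: part1.
- move=> hb x; rewrite /dual hW pmulr_rlt0 ?ltz_nat //.
  exact: (pB2 (proj1 part1 hb x)).
- split.
  + move=> hs x; case gx: (g x) => //; have := hs x; rewrite hW doubleK e2 !inE.
    by case: (hB3 x gx) => ->; lia.
  + move=> hg a; rewrite hW doubleK e2 !inE.
    by case: (hA a (hg a)) => [->|[->|->]]; lia.
- move=> [x gx] [y gy]; split.
  + move=> l; rewrite habs !inE e1 e2; case gl: (g l);
      [case/orP: (hA1 l gl) => /eqP -> | rewrite hB1 //]; lia.
  + have hP : \sum_a (S a ^+ 2 - 4) = 0.
      have := parseval sigma hF hn.
      under eq_bigr => a _ do rewrite hW exprMn.
      rewrite -mulr_sumr.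
      have eF : #|F| = (4 * m * m)%N by rewrite hF -addnn expnD e1; nia.
      rewrite eF.
      move/cancel_m => /(_ m0) hX.
      rewrite sumrB hX sumr_const (_ : #|_| = 4 * m * m)%N; last by rewrite -eF.
      by rewrite -[X in _ - X]mulr_natr !natrM !natz; ring.
    move=> v; rewrite !inE => /or3P [/eqP->|/eqP->|/eqP->].
    * case: (pickP (fun a => S a == 0)) => [a /eqP Sa|H]; first by exists a; rewrite habs Sa muln0.
      exfalso; have nn : forall a, true -> 0 <= S a ^+ 2 - 4.
        move=> a _; case ga: (g a); [case: (hA a ga) => [Sa|[->|->]] // | by case: (hB3 a ga) => ->].
        by have := H a; rewrite /= Sa eqxx.
      have := psumr_eq0P nn hP (i := x) isT.
      by have := H x; case: (hA x gx) => [->|[->|->]].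
    * by exists y; rewrite habs hB1 ?(negbTE gy) // e1 mulnC.
    * case: (pickP (fun a => (S a == 4) || (S a == -4))) => [a Sa|H].
        exists a; rewrite habs e2; case/orP: Sa => /eqP ->; rewrite ?abszN mulnC //.
      exfalso; have nn : forall a, true -> 0 <= 4 - S a ^+ 2.
        move=> a _; case ga: (g a); [case: (hA a ga) => [->|[Sa|Sa]] // | by case: (hB3 a ga) => ->].
          by have := H a; rewrite /= Sa eqxx.
        by have := H a; rewrite /= Sa eqxx orbT.
      have hP' : \sum_a (4 - S a ^+ 2) = 0.
        by rewrite -[LHS]opprK -sumrN; under eq_bigr do rewrite opprB; rewrite hP oppr0.
      have := psumr_eq0P nn hP' (i := x) isT.
      by have := H x; case: (hA x gx) => [->|[->|->]]; rewrite ?eqxx ?orbT.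
Qed.
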